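(* Let $X$ be a $T_1$ topological space. An element $f\in T''(X)$ is a unit of the ring $T''(X)$ if and only if $Z(f)=\{x\in X: f(x)=0\}=\emptyset$.
   Context: $C(X)$ is the ring of real-valued continuous functions on $X$; a cozero set is a set $\{x: g(x)\neq 0\}$ with $g\in C(X)$. $T''(X)$ is the ring (under pointwise operations) of all functions $f\colon X\to\mathbb{R}$ for which there is a dense cozero set $U$ of $X$ with $f|_U$ continuous. *)

(* Defs.v *)
From HB Require Import structures.
From mathcomp Require Import all_boot all_order all_algebra.
From mathcomp Require Import all_classical all_reals all_analysis.
From mathcomp Require Import Rstruct Rstruct_topology.
From Stdlib Require Import Reals.
Set Implicit Arguments. Unset Strict Implicit. Unset Printing Implicit Defensive.
Import Order.TTheory GRing.Theory Num.Theory.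
Local Open Scope classical_set_scope.
Local Open Scope ring_scope.

Definition cozero_set (X : topologicalType) (U : set X) : Prop :=
  exists g : X -> Rdefinitions.R, continuous g /\ U = [set x | g x != 0].

Definition Tpp (X : topologicalType) (f : X -> Rdefinitions.R) : Prop :=
  exists U : set X, cozero_set U /\ dense U /\ {within U, continuous f}.

Definition Tpp_unit (X : topologicalType) (f : X -> Rdefinitions.R) : Prop :=
  exists g : X -> Rdefinitions.R, Tpp g /\ (forall x, f x * g x = 1).

Definition zero_set (X : Type) (f : X -> Rdefinitions.R) : set X :=
  [set x | f x = 0].

(* Main.v *)
Require Import Defs.
From mathcomp Require Import all_boot all_order all_algebra.
From mathcomp Require Import all_classical all_reals all_analysis.
From mathcomp Require Import Rstruct Rstruct_topology.
Import GRing.Theory Num.Theory.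
Local Open Scope classical_set_scope.
Local Open Scope ring_scope.

Theorem theorem2p3 (X : topologicalType) (hT1 : accessible_space X)
  (f : X -> Rdefinitions.R) (hf : Tpp f) :
  Tpp_unit f <-> zero_set f = set0.
Proof.
split.
- move=> [g [_ hg]]; apply/seteqP; split => x //= fx0.
  by have := hg x; rewrite fx0 mul0r => /eqP; rewrite eq_sym oner_eq0.
- move=> hz.
  have fn0 : forall x, f x != 0.
    move=> x; apply/eqP => fx0.
    have : zero_set f x by [].
    by rewrite hz.
  case: hf => U [cU [dU cf]].
  exists (fun x => (f x)^-1); split; last by move=> x; rewrite mulfV.
  exists U; split => //; split => //.
  move=> x.
  exact: (@continuousV _ (subspace U) (from_subspace U f) x (fn0 x) (cf x)).
Qed.
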